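(* Suppose a group $G$ is weakly hyperbolic relative to $\{A,B,C_1,\ldots,C_m\}$, where $A$ and $B$ are conjugate subgroups of $G$. Then $G$ is weakly hyperbolic relative to $\{A,C_1,\ldots,C_m\}$.
   Context: For a group $G$ and a collection $\mathcal H=\{H_1,\ldots,H_k\}$ of subgroups, $X\subset G$ is a relative generating set if $G$ is generated by $X\cup H_1\cup\cdots\cup H_k$; the relative Cayley graph is the Cayley graph of $G$ with respect to $X\cup H_1\cup\cdots\cup H_k$ with combinatorial metric; $G$ is weakly hyperbolic relative to $\mathcal H$ if for some finite relative generating set $X$ this relative Cayley graph is hyperbolic. *)

(* Defs.v *)
From Stdlib Require Import ZArith List.
Set Implicit Arguments.

Record Group := {
  carrier :> Type;
  gmul : carrier -> carrier -> carrier;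
  gone : carrier;
  ginv : carrier -> carrier;
  gmulA : forall x y z, gmul x (gmul y z) = gmul (gmul x y) z;
  gmul1l : forall x, gmul gone x = x;
  gmul1r : forall x, gmul x gone = x;
  gmulVl : forall x, gmul (ginv x) x = gone;
  gmulVr : forall x, gmul x (ginv x) = gone
}.

Arguments gmul {g}.
Arguments gone {g}.
Arguments ginv {g}.

Definition is_subgroup (G : Group) (H : G -> Prop) : Prop :=
  H gone /\ (forall x y, H x -> H y -> H (gmul x y)) /\
  (forall x, H x -> H (ginv x)).
Arguments is_subgroup {G}.

Definition conjugate_subgroups (G : Group) (A B : G -> Prop) : Prop :=
  exists g : G, forall x : G, B x <-> A (gmul g (gmul x (ginv g))).
Arguments conjugate_subgroups {G}.

Definition cay_adj (G : Group) (Sg : G -> Prop) (x y : G) : Prop :=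
  exists s, Sg s /\ (y = gmul x s \/ x = gmul y s).
Arguments cay_adj {G}.

Inductive cay_path (G : Group) (Sg : G -> Prop) : G -> G -> nat -> Prop :=
| cay_path0 : forall x, @cay_path G Sg x x 0
| cay_pathS : forall x y z n, @cay_adj G Sg x y -> @cay_path G Sg y z n ->
                              @cay_path G Sg x z (S n).
Arguments cay_path {G} Sg _ _ _.

Definition cay_dist (G : Group) (Sg : G -> Prop) (x y : G) (d : nat) : Prop :=
  cay_path Sg x y d /\ (forall n, cay_path Sg x y n -> d <= n).
Arguments cay_dist {G}.

(** Gromov hyperbolicity (four-point condition on Gromov products, written
    with doubled Gromov products 2(x|y)_w = d(x,w)+d(y,w)-d(x,y)):
    exists delta, (x|z)_w >= min((x|y)_w, (y|z)_w) - delta for all x,y,z,w. *)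
Definition cay_hyperbolic (G : Group) (Sg : G -> Prop) : Prop :=
  exists delta : nat,
    forall (x y z w : G) (dxy dxz dyz dxw dyw dzw : nat),
      cay_dist Sg x y dxy -> cay_dist Sg x z dxz -> cay_dist Sg y z dyz ->
      cay_dist Sg x w dxw -> cay_dist Sg y w dyw -> cay_dist Sg z w dzw ->
      (Z.of_nat dxw + Z.of_nat dzw - Z.of_nat dxz >=
       Z.min (Z.of_nat dxw + Z.of_nat dyw - Z.of_nat dxy)
             (Z.of_nat dyw + Z.of_nat dzw - Z.of_nat dyz)
       - 2 * Z.of_nat delta)%Z.
Arguments cay_hyperbolic {G}.

Definition rel_alphabet (G : Group) (X : list G) (Hs : list (G -> Prop))
  : G -> Prop :=
  fun s => In s X \/ exists H, In H Hs /\ H s.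
Arguments rel_alphabet {G}.

Definition rel_generating (G : Group) (X : list G) (Hs : list (G -> Prop))
  : Prop :=
  forall g : G, exists n, cay_path (rel_alphabet X Hs) gone g n.
Arguments rel_generating {G}.

Definition weakly_hyperbolic_rel (G : Group) (Hs : list (G -> Prop)) : Prop :=
  exists X : list G, rel_generating X Hs /\
                     cay_hyperbolic (rel_alphabet X Hs).

(* Main.v *)
Require Import Defs.
From Stdlib Require Import ZArith List.
From Stdlib Require Import Arith Lia Classical ClassicalEpsilon.

Definition adist (i j : nat) := (i - j) + (j - i).

Fixpoint fmin (f : nat -> nat) (n : nat) : nat :=
  match n with 0 => f 0 | S n' => Nat.min (fmin f n') (f (S n')) end.
Fixpoint fmax (f : nat -> nat) (n : nat) : nat :=
  match n with 0 => f 0 | S n' => Nat.max (fmax f n') (f (S n')) end.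

Lemma fmin_le f n i : i <= n -> fmin f n <= f i.
Proof.
  induction n; simpl; intros.
  - assert (i = 0) by lia; subst; lia.
  - destruct (Nat.eq_dec i (S n)). subst; lia. specialize (IHn ltac:(lia)); lia.
Qed.
Lemma fmin_ex f n : exists i, i <= n /\ fmin f n = f i.
Proof.
  induction n; simpl. exists 0; auto.
  destruct IHn as [i [Hi E]].
  destruct (Nat.le_ge_cases (fmin f n) (f (S n))).
  - exists i; split; lia.
  - exists (S n); split; lia.
Qed.
Lemma fmax_ge f n i : i <= n -> f i <= fmax f n.
Proof.
  induction n; simpl; intros.
  - assert (i = 0) by lia; subst; lia.
  - destruct (Nat.eq_dec i (S n)). subst; lia. specialize (IHn ltac:(lia)); lia.
Qed.
Lemma fmax_ex f n : exists i, i <= n /\ fmax f n = f i.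
Proof.
  induction n; simpl. exists 0; auto.
  destruct IHn as [i [Hi E]].
  destruct (Nat.le_ge_cases (fmax f n) (f (S n))).
  - exists (S n); split; lia.
  - exists i; split; lia.
Qed.

Lemma last_true (P : nat -> Prop) m : P 0 -> exists t, t <= m /\ P t /\ (t = m \/ ~ P (S t)).
Proof.
  intros H0; induction m.
  - exists 0; auto.
  - destruct IHm as [t [Ht [Pt [E|N]]]].
    + destruct (classic (P (S m))).
      * exists (S m); auto.
      * exists t; subst; auto.
    + exists t; split; [lia|auto].
Qed.

Lemma least_ex (P : nat -> Prop) n : P n -> exists m, P m /\ forall k, P k -> m <= k.
Proof.
  induction n as [n IH] using lt_wf_ind; intros Hn.
  destruct (classic (exists k, k < n /\ P k)) as [[k [Hk Pk]]|N].
  - exact (IH k Hk Pk).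
  - exists n; split; auto. intros k Pk. destruct (Nat.lt_ge_cases k n); auto.
    exfalso; apply N; eauto.
Qed.

Lemma sq_le_4pow m : (m+1)*(m+1) <= 4^m.
Proof.
  induction m; simpl. lia.
  nia.
Qed.

Lemma exp_dom c : exists j0, forall j, j0 <= j -> c * (j+2) < 2^j.
Proof.
  exists (2*(2*c+2)). intros j Hj.
  induction Hj.
  - rewrite Nat.pow_mul_r. change (2^2) with 4.
    pose proof (sq_le_4pow (2*c+2)). nia.
  - rewrite Nat.pow_succ_r'. nia.
Qed.

Lemma bound_log (a s e : nat) : 1 <= a -> exists B, forall D,
  (forall k, a * D <= 2^k -> D <= s + e * k) -> D <= B.
Proof.
  intros Ha.
  destruct (exp_dom (a * (s + e))) as [j0 Hj0].
  exists (s + e * j0). intros D HD.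
  assert (Hex : a * D <= 2^(a*D)) by (pose proof (Nat.pow_gt_lin_r 2 (a*D)); lia).
  destruct (least_ex (fun k => a * D <= 2^k) _ Hex) as [k [Hk Hmin]].
  destruct k as [|j].
  - specialize (HD 0 Hk). lia.
  - assert (Hlt : 2^j < a * D).
    { destruct (Nat.lt_ge_cases (2^j) (a*D)); auto. specialize (Hmin j H); lia. }
    specialize (HD _ Hk).
    destruct (Nat.lt_ge_cases j j0).
    + assert (e * S j <= e * j0) by nia. lia.
    + specialize (Hj0 j H).
      exfalso.
      assert (a * D <= a * (s + e * S j)) by nia.
      assert (a * (s + e * S j) <= a * (s + e) * (j + 2)) by nia.
      lia.
Qed.

Definition Hyp {V} (d : V -> V -> nat) (δ : nat) := forall x y z w,
  d x z + d y w <= Nat.max (d x y + d z w) (d x w + d y z) + 2 * δ.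

Definition Geo {V} (d : V -> V -> nat) (f : nat -> V) (x y : V) :=
  f 0 = x /\ f (d x y) = y /\
  forall i j, i <= d x y -> j <= d x y -> d (f i) (f j) = adist i j.

Definition Metric {V} (d : V -> V -> nat) :=
  (forall x, d x x = 0) /\ (forall x y, d x y = d y x) /\
  (forall x y z, d x z <= d x y + d y z).

Definition Geodesic {V} (d : V -> V -> nat) := forall x y, exists f, Geo d f x y.

Section OneMetric.
Context {V : Type} (d : V -> V -> nat) (Md : Metric d).

Lemma dsym x y : d x y = d y x. Proof. apply Md. Qed.
Lemma drefl x : d x x = 0. Proof. apply Md. Qed.
Lemma dtri x y z : d x z <= d x y + d y z. Proof. apply Md. Qed.

Lemma geo_rev f x y : Geo d f x y -> Geo d (fun t => f (d x y - t)) y x.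
Proof.
  intros [H0 [H1 H2]]. unfold Geo. rewrite (dsym y x). split; [|split].
  - rewrite Nat.sub_0_r; auto.
  - rewrite Nat.sub_diag; auto.
  - intros i j Hi Hj. rewrite H2 by lia. unfold adist; lia.
Qed.

Definition Chain w r s a b N := exists f : nat -> V, f 0 = a /\ f N = b /\
  (forall k, k <= N -> r <= d w (f k)) /\ (forall k, k < N -> d (f k) (f (S k)) <= s).

Lemma chain_app w r s a b c N1 N2 : Chain w r s a b N1 -> Chain w r s b c N2 ->
  Chain w r s a c (N1 + N2).
Proof.
  intros [f [f0 [f1 [fr fs]]]] [g [g0 [g1 [gr gs]]]].
  exists (fun k => if k <=? N1 then f k else g (k - N1)). split; [|split; [|split]].
  - simpl. auto.
  - destruct (Nat.leb_spec (N1+N2) N1).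
    + assert (N2 = 0) by lia. subst. rewrite Nat.add_0_r. congruence.
    + rewrite Nat.add_comm, Nat.add_sub. auto.
  - intros k Hk. destruct (Nat.leb_spec k N1). apply fr; lia. apply gr; lia.
  - intros k Hk. destruct (Nat.leb_spec k N1); destruct (Nat.leb_spec (S k) N1).
    + apply fs; lia.
    + assert (k = N1) by lia. subst k. rewrite f1, <- g0.
      replace (S N1 - N1) with 1 by lia. apply gs. lia.
    + lia.
    + replace (S k - N1) with (S (k - N1)) by lia. apply gs; lia.
Qed.

Lemma chain_rev w r s a b N : Chain w r s a b N -> Chain w r s b a N.
Proof.
  intros [f [f0 [f1 [fr fs]]]].
  exists (fun k => f (N - k)). split; [|split; [|split]].
  - rewrite Nat.sub_0_r; auto.
  - rewrite Nat.sub_diag; auto.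
  - intros k Hk. apply fr; lia.
  - intros k Hk. replace (N - k) with (S (N - S k)) by lia. rewrite dsym. apply fs; lia.
Qed.

Lemma chain_mono w r s s' a b N : s <= s' -> Chain w r s a b N -> Chain w r s' a b N.
Proof.
  intros Hs [f [f0 [f1 [fr fs]]]]. exists f; repeat split; auto.
  intros k Hk; specialize (fs k Hk); lia.
Qed.

Lemma chain_gp_aux δ (H : Hyp d δ) : forall k w M (f : nat -> V) st N,
  1 <= N -> N <= 2^k ->
  (forall i, st <= i -> i < st + N -> d (f i) (f (S i)) + M <= d w (f i) + d w (f (S i))) ->
  d (f st) (f (st+N)) + M <= d w (f st) + d w (f (st+N)) + 2*(δ*k).
Proof.
  induction k; intros w M f st N HN1 HN2 Hst.
  - simpl in HN2. assert (N = 1) by lia. subst. specialize (Hst st ltac:(lia) ltac:(lia)).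
    rewrite Nat.add_1_r. lia.
  - destruct (Nat.le_gt_cases N (2^k)).
    + specialize (IHk w M f st N HN1 H0 Hst). nia.
    + assert (2^k <> 0) by (apply Nat.pow_nonzero; lia).
      set (h := N / 2).
      assert (Hh1 : 1 <= h) by (unfold h; apply Nat.div_le_lower_bound; lia).
      assert (Hh2 : 2 * h <= N) by (unfold h; apply Nat.Div0.mul_div_le; lia).
      assert (Hh3 : N < 2 * h + 2) by (unfold h; pose proof (Nat.div_mod N 2 ltac:(lia)); pose proof (Nat.mod_upper_bound N 2 ltac:(lia)); lia).
      rewrite Nat.pow_succ_r' in HN2.
      pose proof (IHk w M f st h Hh1 ltac:(lia) ltac:(intros; apply Hst; lia)) as I1.
      pose proof (IHk w M f (st+h) (N-h) ltac:(lia) ltac:(lia) ltac:(intros; apply Hst; lia)) as I2.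
      replace (st + h + (N - h)) with (st + N) in I2 by lia.
      set (x := f st) in *. set (y := f (st + h)) in *. set (z := f (st+N)) in *.
      pose proof (H x y z w) as H4.
      rewrite (dsym z w), (dsym y w), (dsym x w) in H4.
      replace (δ * S k) with (δ * k + δ) by lia.
      lia.
Qed.

Lemma chain_gp δ (H : Hyp d δ) w r s a b N k : Chain w r s a b N -> 1 <= N -> N <= 2^k ->
  d a b + (2*r - s) <= d w a + d w b + 2*(δ*k).
Proof.
  intros [f [f0 [f1 [fr fs]]]] HN1 HN2.
  subst. apply (chain_gp_aux δ H k w (2*r-s) f 0 N HN1 HN2).
  intros i _ Hi. specialize (fs i Hi). pose proof (fr i ltac:(lia)). pose proof (fr (S i) ltac:(lia)).
  pose proof (dtri (f i) w (f (S i))). rewrite (dsym (f i) w) in H2. lia.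
Qed.

End OneMetric.

Section Morse.
Context {V : Type} (d d' : V -> V -> nat) (Md : Metric d) (Md' : Metric d')
  (Gd : Geodesic d) (Gd' : Geodesic d') (K L δ : nat)
  (HK : forall x y, d x y <= K * d' x y) (HL : forall x y, d' x y <= L * d x y)
  (Hd : Hyp d δ).

Lemma left_end (σ c : nat -> V) m n q t0 D :
  (forall t t', t <= m -> t' <= m -> d (σ t) (σ t') = adist t t') ->
  σ 0 = c 0 -> t0 <= m -> q = σ t0 ->
  (forall t, t <= m -> exists i, i <= n /\ d (σ t) (c i) <= D) ->
  (forall i, i <= n -> D <= d q (c i)) ->
  exists t1 i1, t1 <= t0 /\ t0 - t1 <= 2*D /\ i1 <= n /\ d (σ t1) (c i1) <= D /\
    Chain d q D 1 (σ t1) (c i1) (d (σ t1) (c i1)).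
Proof.
  intros Hσ H0 Ht0 Hq Hcov Hfar.
  destruct (Nat.le_gt_cases (2*D) t0).
  - destruct (Hcov (t0 - 2*D) ltac:(lia)) as [i1 [Hi1 Hd1]].
    exists (t0 - 2*D), i1. split; [lia|split; [lia|split; [lia|split; [lia|]]]].
    destruct (Gd (σ (t0 - 2*D)) (c i1)) as [ρ [R0 [R1 R2]]].
    exists ρ. split; [auto|split; [auto|split]].
    + intros k Hk. pose proof (R2 0 k ltac:(lia) Hk) as E. rewrite R0 in E.
      pose proof (dtri d Md q (ρ k) (σ (t0 - 2*D))) as T.
      rewrite (dsym d Md (ρ k)) in T. rewrite Hq in T. rewrite Hq.
      rewrite Hσ in T by lia. unfold adist in *. lia.
    + intros k Hk. rewrite R2 by lia. unfold adist; lia.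
  - exists 0, 0. rewrite H0, (drefl d Md). split; [lia|split; [lia|split; [lia|split; [lia|]]]].
    exists (fun _ => c 0). split; [auto|split; [auto|split]].
    + intros k Hk. apply Hfar; lia.
    + intros; lia.
Qed.

Lemma chain_c_up (c : nat -> V) n q D i1 i2 :
  (forall i j, i <= n -> j <= n -> d' (c i) (c j) = adist i j) ->
  (forall i, i <= n -> D <= d q (c i)) -> i1 <= i2 -> i2 <= n ->
  Chain d q D (Nat.max K 1) (c i1) (c i2) (adist i1 i2).
Proof.
  intros Hc Hfar H12 H2n.
  exists (fun u => c (i1 + u)). split; [|split; [|split]].
  - rewrite Nat.add_0_r; auto.
  - f_equal. unfold adist; lia.
  - intros k Hk. apply Hfar. unfold adist in Hk; lia.
  - intros k Hk. unfold adist in Hk. pose proof (HK (c (i1 + k)) (c (S (i1 + k)))).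
    rewrite Hc in H by lia. unfold adist in H. replace (i1 + S k) with (S (i1 + k)) by lia.
    nia.
Qed.

Lemma chain_c (c : nat -> V) n q D i1 i2 :
  (forall i j, i <= n -> j <= n -> d' (c i) (c j) = adist i j) ->
  (forall i, i <= n -> D <= d q (c i)) -> i1 <= n -> i2 <= n ->
  Chain d q D (Nat.max K 1) (c i1) (c i2) (adist i1 i2).
Proof.
  intros Hc Hfar H1 H2. destruct (Nat.le_ge_cases i1 i2).
  - apply chain_c_up with n; auto.
  - apply chain_rev; auto. replace (adist i1 i2) with (adist i2 i1) by (unfold adist; lia).
    apply chain_c_up with n; auto.
Qed.


Lemma morseA : exists D1, forall x y c σ, Geo d' c x y -> Geo d σ x y ->
  forall t, t <= d x y -> exists i, i <= d' x y /\ d (σ t) (c i) <= D1.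
Proof.
  destruct (bound_log (6*L+2) (Nat.max K 1) δ ltac:(lia)) as [B HB].
  exists B. intros x y c σ [C0 [C1 C2]] [S0 [S1 S2]].
  set (n := d' x y) in *. set (m := d x y) in *.
  set (g := fun t => fmin (fun i => d (σ t) (c i)) n).
  set (D := fmax g m).
  assert (Hcov : forall t, t <= m -> exists i, i <= n /\ d (σ t) (c i) <= D).
  { intros t Ht. destruct (fmin_ex (fun i => d (σ t) (c i)) n) as [i [Hi E]].
    exists i; split; auto. pose proof (fmax_ge g m t Ht) as HH. unfold g in HH. cbv beta in HH. unfold D, g. lia. }
  assert (HDB : D <= B).
  { apply HB. intros k Hk.
    destruct (fmax_ex g m) as [t0 [Ht0 E0]]. fold D in E0. unfold g in E0.
    assert (Hfar : forall i, i <= n -> D <= d (σ t0) (c i)).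
    { intros i Hi. rewrite E0. apply (fmin_le (fun i => d (σ t0) (c i))); auto. }
    destruct (left_end σ c m n (σ t0) t0 D) as [t1 [i1 [Ht1a [Ht1b [Hi1 [Hd1 Ch1]]]]]]; auto.
    { congruence. }
    destruct (left_end (fun t => σ (m - t)) (fun i => c (n - i)) m n (σ t0) (m - t0) D)
      as [t2 [i2 [Ht2a [Ht2b [Hi2 [Hd2 Ch3]]]]]]; auto.
    { intros; rewrite S2 by lia; unfold adist; lia. }
    { rewrite !Nat.sub_0_r; congruence. }
    { lia. }
    { f_equal; lia. }
    { intros t Ht. destruct (Hcov (m - t)) as [i [Hi Hdi]]; [lia|].
      exists (n - i); split; [lia|]. replace (n - (n - i)) with i by lia; auto. }
    { intros; apply Hfar; lia. }
    cbv beta in Hd2, Ch3.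
    pose proof (chain_c c n (σ t0) D i1 (n - i2) C2 Hfar Hi1 ltac:(lia)) as Ch2.
    pose proof (chain_app d _ _ _ _ _ _ _ _
      (chain_mono d (σ t0) D 1 (Nat.max K 1) _ _ _ ltac:(lia) Ch1)
      (chain_app d _ _ _ _ _ _ _ _ Ch2
         (chain_rev d Md _ _ _ _ _ _ (chain_mono d (σ t0) D 1 (Nat.max K 1) _ _ _ ltac:(lia) Ch3)))) as Ch.
    assert (Ha : adist i1 (n - i2) <= L * d (c i1) (c (n - i2))).
    { rewrite <- C2 by lia. apply HL. }
    pose proof (dtri d Md (c i1) (σ t1) (c (n - i2))) as T1.
    pose proof (dtri d Md (σ t1) (σ t0) (c (n - i2))) as T2.
    pose proof (dtri d Md (σ t0) (σ (m - t2)) (c (n - i2))) as T3.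
    rewrite (dsym d Md (c i1) (σ t1)) in T1.
    rewrite (S2 t1 t0) in T2 by lia. rewrite (S2 t0 (m - t2)) in T3 by lia.
    assert (Hl2 : d (c (n - i2)) (σ (m - t2)) = d (σ (m - t2)) (c (n - i2))) by (apply dsym; auto).
    assert (HN : d (σ t1) (c i1) + (adist i1 (n - i2) + d (σ (m - t2)) (c (n - i2))) <= (6*L+2) * D).
    { assert (d (c i1) (c (n - i2)) <= 6 * D) by (unfold adist in *; lia).
      assert (L * d (c i1) (c (n - i2)) <= L * (6 * D)) by (apply Nat.mul_le_mono_l; auto).
      nia. }
    destruct (Nat.eq_dec (d (σ t1) (c i1) + (adist i1 (n - i2) + d (σ (m - t2)) (c (n - i2)))) 0) as [HN0|HN0].
    - assert (i1 = n - i2) by (unfold adist in HN0; lia).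
      pose proof (dtri d Md (σ t1) (c i1) (σ (m - t2))) as T4.
      rewrite S2 in T4 by lia. subst i1. rewrite Hl2 in T4.
      assert (t1 = t0) by (unfold adist in T4; lia). subst t1.
      pose proof (Hfar (n - i2) ltac:(lia)). lia.
    - pose proof (chain_gp d Md δ Hd _ _ _ _ _ _ k Ch ltac:(lia) ltac:(lia)) as G.
      rewrite S2 in G by lia. rewrite (dsym d Md (σ t0) (σ t1)) in G. rewrite (S2 t1 t0) in G by lia. rewrite (S2 t0 (m - t2)) in G by lia.
      unfold adist in G. lia. }
  intros t Ht. destruct (Hcov t Ht) as [i [Hi Hdi]]. exists i; split; [auto|lia].
Qed.


Lemma morseAB : exists D1 D2, forall x y c σ, Geo d' c x y -> Geo d σ x y ->
  (forall t, t <= d x y -> exists i, i <= d' x y /\ d (σ t) (c i) <= D1) /\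
  (forall j, j <= d' x y -> exists t, t <= d x y /\ d (c j) (σ t) <= D2).
Proof.
  destruct morseA as [D1 HA].
  exists D1, (K * (L * (2 * D1 + 1)) + D1).
  intros x y c σ Gc Gs. pose proof (HA x y c σ Gc Gs) as HA'. split; auto.
  destruct Gc as [C0 [C1 C2]]. destruct Gs as [S0 [S1 S2]].
  set (n := d' x y) in *. set (m := d x y) in *.
  intros j Hj.
  destruct (last_true (fun t => exists i, i <= j /\ d (σ t) (c i) <= D1) m) as [t [Htm [[i1 [Hi1 Hd1]] Hlast]]].
  { exists 0. split; [lia|]. rewrite S0, <- C0, (drefl d Md). lia. }
  exists t. split; auto.
  assert (Hji : j - i1 <= L * (2 * D1 + 1)).
  { destruct (Nat.eq_dec t m) as [Et|Et].
    - subst t. rewrite S1, <- C1 in Hd1.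
      pose proof (HL (c n) (c i1)) as H1. rewrite C2 in H1 by lia. unfold adist in H1.
      assert (L * d (c n) (c i1) <= L * (2 * D1 + 1)) by (apply Nat.mul_le_mono_l; lia).
      lia.
    - destruct Hlast as [Hl|Hl]; [lia|].
      destruct (HA' (S t) ltac:(lia)) as [i2 [Hi2 Hd2]].
      assert (j < i2).
      { destruct (Nat.lt_ge_cases j i2); auto. exfalso; apply Hl; exists i2; auto. }
      pose proof (dtri d Md (c i1) (σ t) (c i2)) as T1.
      pose proof (dtri d Md (σ t) (σ (S t)) (c i2)) as T2.
      rewrite S2 in T2 by lia. rewrite (dsym d Md (c i1) (σ t)) in T1.
      pose proof (HL (c i1) (c i2)) as H1. rewrite C2 in H1 by lia. unfold adist in H1, T2.
      assert (L * d (c i1) (c i2) <= L * (2 * D1 + 1)) by (apply Nat.mul_le_mono_l; lia).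
      lia. }
  pose proof (dtri d Md (c j) (c i1) (σ t)) as T.
  pose proof (HK (c j) (c i1)) as H1. rewrite C2 in H1 by lia. unfold adist in H1.
  rewrite (dsym d Md (c i1)) in T.
  assert (K * (j - i1) <= K * (L * (2 * D1 + 1))) by (apply Nat.mul_le_mono_l; lia).
  assert (i1 - j = 0) by lia. rewrite H0, Nat.add_0_r in H1.
  lia.
Qed.

End Morse.

Lemma geo_split {V} (dd : V -> V -> nat) f x y i : Geo dd f x y -> i <= dd x y ->
  dd x (f i) + dd (f i) y = dd x y.
Proof.
  intros [H0 [H1 H2]] Hi. pose proof (H2 0 i ltac:(lia) Hi) as E1.
  pose proof (H2 i (dd x y) Hi ltac:(lia)) as E2. rewrite H0 in E1. rewrite H1 in E2.
  rewrite E1, E2. unfold adist; lia.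
Qed.

Section Final.
Context {V : Type} (d d' : V -> V -> nat) (Md : Metric d) (Md' : Metric d')
  (Gd : Geodesic d) (Gd' : Geodesic d') (K L δ : nat)
  (HK : forall x y, d x y <= K * d' x y) (HL : forall x y, d' x y <= L * d x y)
  (Hd : Hyp d δ).

Lemma M12 : exists D1 D2, forall x y c, Geo d' c x y ->
  (forall j, j <= d' x y -> d (c j) x + d (c j) y <= d x y + 2 * D2) /\
  (forall q, exists i, i <= d' x y /\
     2 * d q (c i) + d x y <= d q x + d q y + 1 + 4 * δ + 2 * D1).
Proof.
  destruct (morseAB d d' Md Gd K L δ HK HL Hd) as [D1 [D2 HM]].
  exists D1, D2. intros x y c Gc.
  destruct (Gd x y) as [σ Gs].
  destruct (HM x y c σ Gc Gs) as [HA HB].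
  pose proof Gs as [S0 [S1 S2]].
  split.
  - intros j Hj. destruct (HB j Hj) as [t [Ht Hdt]].
    pose proof (geo_split d σ x y t Gs Ht).
    pose proof (dtri d Md (c j) (σ t) x). pose proof (dtri d Md (c j) (σ t) y).
    rewrite (dsym d Md (σ t) x) in H0. lia.
  - intros q.
    set (m := d x y) in *.
    pose proof (dtri d Md x q y). pose proof (dtri d Md q x y). pose proof (dsym d Md x q).
    pose proof (dtri d Md x y q). pose proof (dsym d Md y q).
    fold m in H, H0, H2.
    set (A := d x q + m - d q y).
    set (t := A / 2).
    assert (HtA : 2 * t <= A <= 2 * t + 1).
    { unfold t. pose proof (Nat.div_mod A 2 ltac:(lia)). pose proof (Nat.mod_upper_bound A 2 ltac:(lia)). lia. }
    assert (Htm : t <= m) by (unfold A in HtA; lia).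
    destruct (HA t Htm) as [i [Hi Hdi]].
    exists i. split; auto.
    pose proof (Hd q x (σ t) y) as H4.
    pose proof (geo_split d σ x y t Gs Htm) as H5. fold m in H5.
    pose proof (dtri d Md q (σ t) (c i)).
    pose proof (S2 0 t ltac:(lia) Htm) as H7. rewrite S0 in H7. unfold adist in H7.
    fold m in H4. unfold A in HtA. lia.
Qed.


Lemma thin : exists τ, forall x y z c1 c2 c3,
  Geo d' c1 x y -> Geo d' c2 y z -> Geo d' c3 x z ->
  forall j, j <= d' x z -> exists i,
    (i <= d' x y /\ d' (c3 j) (c1 i) <= τ) \/ (i <= d' y z /\ d' (c3 j) (c2 i) <= τ).
Proof.
  destruct M12 as [D1 [D2 HM]].
  exists (L * (D2 + 3 * δ + D1 + 1)).
  intros x y z c1 c2 c3 G1 G2 G3 j Hj.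
  set (p := c3 j).
  pose proof (proj1 (HM x z c3 G3) j Hj) as H1. fold p in H1.
  pose proof (Hd x y z p) as H2.
  pose proof (dsym d Md p x). pose proof (dsym d Md p y). pose proof (dsym d Md p z).
  assert (Hor : d p x + d p y <= d x y + 2 * D2 + 2 * δ \/ d p y + d p z <= d y z + 2 * D2 + 2 * δ) by lia.
  destruct Hor as [Ho|Ho].
  - destruct (proj2 (HM x y c1 G1) p) as [i [Hi Hdi]].
    exists i. left. split; auto.
    eapply Nat.le_trans. apply HL. apply Nat.mul_le_mono_l. lia.
  - destruct (proj2 (HM y z c2 G2) p) as [i [Hi Hdi]].
    exists i. right. split; auto.
    eapply Nat.le_trans. apply HL. apply Nat.mul_le_mono_l. lia.
Qed.

Lemma tripod τ : (forall x y z c1 c2 c3,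
  Geo d' c1 x y -> Geo d' c2 y z -> Geo d' c3 x z ->
  forall j, j <= d' x z -> exists i,
    (i <= d' x y /\ d' (c3 j) (c1 i) <= τ) \/ (i <= d' y z /\ d' (c3 j) (c2 i) <= τ)) ->
  forall x z w c3, Geo d' c3 x z -> exists j, j <= d' x z /\
    d' x z + 2 * d' w (c3 j) <= d' x w + d' z w + 4 * τ + 2.
Proof.
  intros Hthin x z w c3 G3.
  destruct (Gd' x w) as [c1 G1]. destruct (Gd' w z) as [c2 G2].
  pose proof (Hthin x w z c1 c2 c3 G1 G2 G3) as T.
  pose proof G1 as [A0 [A1 A2]]. pose proof G2 as [B0 [B1 B2]]. pose proof G3 as [C0 [C1 C2]].
  destruct (last_true (fun j => exists i, i <= d' x w /\ d' (c3 j) (c1 i) <= τ) (d' x z))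
    as [j [Hj [[i1 [Hi1 Hd1]] Hl]]].
  { exists 0. split; [lia|]. rewrite C0, <- A0, (drefl d' Md'). lia. }
  pose proof (geo_split d' c1 x w i1 G1 Hi1) as S1.
  pose proof (geo_split d' c3 x z j G3 Hj) as S3.
  pose proof (dtri d' Md' x (c1 i1) (c3 j)). pose proof (dtri d' Md' (c3 j) (c1 i1) w).
  pose proof (dsym d' Md' (c3 j) w). pose proof (dsym d' Md' (c1 i1) (c3 j)).
  pose proof (dsym d' Md' z w).
  destruct (Nat.eq_dec j (d' x z)) as [E|E].
  - exists j. split; auto. rewrite E, C1 in *.
    rewrite (drefl d' Md') in S3. lia.
  - destruct Hl as [Hl|Hl]; [lia|].
    destruct (T (S j) ltac:(lia)) as [i2 [[Hi2 Hd2]|[Hi2 Hd2]]].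
    + exfalso; apply Hl; exists i2; auto.
    + exists j. split; auto.
      pose proof (geo_split d' c2 w z i2 G2 Hi2) as S2.
      pose proof (C2 j (S j) Hj ltac:(lia)) as E1. unfold adist in E1.
      pose proof (dtri d' Md' (c3 j) (c3 (S j)) (c2 i2)).
      pose proof (dtri d' Md' w (c2 i2) (c3 j)). pose proof (dtri d' Md' (c3 j) (c2 i2) z).
      pose proof (dsym d' Md' (c2 i2) (c3 j)).
      lia.
Qed.

Lemma final : exists δ', Hyp d' δ'.
Proof.
  destruct thin as [τ Hthin].
  pose proof (tripod τ Hthin) as Htri.
  exists (3 * τ + 1). intros x y z w.
  destruct (Gd' x y) as [c1 G1]. destruct (Gd' y z) as [c2 G2]. destruct (Gd' x z) as [c3 G3].
  destruct (Htri x z w c3 G3) as [j [Hj Hp]].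
  set (p := c3 j) in *.
  pose proof (dsym d' Md' z w). pose proof (dsym d' Md' y w). pose proof (dsym d' Md' x w).
  destruct (Hthin x y z c1 c2 c3 G1 G2 G3 j Hj) as [i [[Hi Hdi]|[Hi Hdi]]]; fold p in Hdi.
  - pose proof (geo_split d' c1 x y i G1 Hi).
    pose proof (dtri d' Md' x (c1 i) w). pose proof (dtri d' Md' y (c1 i) w).
    pose proof (dtri d' Md' w p (c1 i)). pose proof (dsym d' Md' w (c1 i)).
    pose proof (dsym d' Md' y (c1 i)).
    lia.
  - pose proof (geo_split d' c2 y z i G2 Hi).
    pose proof (dtri d' Md' y (c2 i) w). pose proof (dtri d' Md' z (c2 i) w).
    pose proof (dtri d' Md' w p (c2 i)). pose proof (dsym d' Md' w (c2 i)).
    pose proof (dsym d' Md' z (c2 i)).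
    lia.
Qed.

End Final.

Lemma geodesic_of_step {V} (d : V -> V -> nat) (Md : Metric d) :
  (forall x y, d x y = 0 -> x = y) ->
  (forall x y n, d x y = S n -> exists z, d x z = 1 /\ d z y = n) -> Geodesic d.
Proof.
  intros H0 Hst x y. remember (d x y) as n eqn:En. revert x y En.
  induction n; intros x y En.
  - exists (fun _ => x). unfold Geo. rewrite <- En. pose proof (H0 x y (eq_sym En)). subst y.
    split; auto. split; auto. intros i j Hi Hj. rewrite (drefl d Md). unfold adist; lia.
  - destruct (Hst x y n (eq_sym En)) as [z [Hxz Hzy]].
    destruct (IHn z y (eq_sym Hzy)) as [f [F0 [F1 F2]]].
    rewrite Hzy in F1, F2.
    exists (fun i => match i with 0 => x | S i' => f i' end). unfold Geo. rewrite <- En.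
    split; auto. split; auto.
    assert (Hx : forall j, j <= n -> d x (f j) = S j).
    { intros j Hj. apply Nat.le_antisymm.
      - pose proof (dtri d Md x z (f j)). rewrite <- F0 in H at 2. rewrite F2 in H by lia.
        unfold adist in H. lia.
      - pose proof (dtri d Md x (f j) y). rewrite <- F1 in H at 2. rewrite F2 in H by lia.
        unfold adist in H. lia. }
    intros [|i] [|j] Hi Hj.
    + rewrite (drefl d Md). reflexivity.
    + rewrite Hx by lia. unfold adist; lia.
    + rewrite (dsym d Md), Hx by lia. unfold adist; lia.
    + rewrite F2 by lia. unfold adist; lia.
Qed.

Section Graph.
Context (G : Group) (Sg : G -> Prop).

Lemma adj_sym x y : cay_adj Sg x y -> cay_adj Sg y x.
Proof. intros [s [Hs [E|E]]]; exists s; auto. Qed.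

Lemma path_one x y : cay_adj Sg x y -> cay_path Sg x y 1.
Proof. intros H. econstructor; eauto. constructor. Qed.

Lemma path_app x y z n m : cay_path Sg x y n -> cay_path Sg y z m -> cay_path Sg x z (n + m).
Proof. induction 1; intros; simpl; auto. econstructor; eauto. Qed.

Lemma path_rev x y n : cay_path Sg x y n -> cay_path Sg y x n.
Proof.
  induction 1 as [|a b c m H P IH]. constructor.
  replace (S m) with (m + 1) by lia. eapply path_app; eauto. apply path_one, adj_sym; auto.
Qed.

Lemma path_0 x y : cay_path Sg x y 0 -> x = y.
Proof. intros H; inversion H; auto. Qed.

Lemma path_S_inv x y n : cay_path Sg x y (S n) -> exists z, cay_adj Sg x z /\ cay_path Sg z y n.
Proof. intros H; inversion H; subst; eauto. Qed.

Lemma adj_mul h x y : cay_adj Sg x y -> cay_adj Sg (gmul h x) (gmul h y).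
Proof.
  intros [s [Hs [E|E]]]; exists s; split; auto; subst; [left|right]; apply gmulA.
Qed.

Lemma path_mul h x y n : cay_path Sg x y n -> cay_path Sg (gmul h x) (gmul h y) n.
Proof. induction 1. constructor. econstructor; eauto. apply adj_mul; auto. Qed.

Definition Connected := forall x y : G, exists n, cay_path Sg x y n.

Lemma connected_of_gen : (forall g : G, exists n, cay_path Sg gone g n) -> Connected.
Proof.
  intros H x y. destruct (H (gmul (ginv x) y)) as [n Hn]. exists n.
  apply (path_mul x) in Hn. rewrite gmul1r, gmulA, gmulVr, gmul1l in Hn. auto.
Qed.

Lemma dist_fun : Connected -> exists d : G -> G -> nat, forall x y, cay_dist Sg x y (d x y).
Proof.
  intros HC.
  assert (Hex : forall x y, exists n, cay_dist Sg x y n).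
  { intros x y. destruct (HC x y) as [n Hn].
    destruct (least_ex (fun n => cay_path Sg x y n) n Hn) as [m [Hm Hmin]].
    exists m; split; auto. }
  exists (fun x y => proj1_sig (constructive_indefinite_description _ (Hex x y))).
  intros x y. exact (proj2_sig (constructive_indefinite_description _ (Hex x y))).
Qed.

Section Dist.
Context (d : G -> G -> nat) (Hd : forall x y, cay_dist Sg x y (d x y)).

Lemma dist_uniq x y n : cay_dist Sg x y n -> n = d x y.
Proof.
  intros [H1 H2]. destruct (Hd x y) as [H3 H4]. specialize (H2 _ H3). specialize (H4 _ H1). lia.
Qed.

Lemma d_path x y : cay_path Sg x y (d x y). Proof. apply Hd. Qed.
Lemma d_min x y n : cay_path Sg x y n -> d x y <= n. Proof. apply Hd. Qed.

Lemma d_metric : Metric d.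
Proof.
  split; [|split].
  - intros x. pose proof (d_min x x 0 (cay_path0 G Sg x)). lia.
  - intros x y. apply Nat.le_antisymm; apply d_min, path_rev, d_path.
  - intros x y z. apply d_min. apply path_app with y; apply d_path.
Qed.

Lemma d_zero x y : d x y = 0 -> x = y.
Proof. intros E. apply path_0. rewrite <- E. apply d_path. Qed.

Lemma d_step x y n : d x y = S n -> exists z, d x z = 1 /\ d z y = n.
Proof.
  intros E. pose proof (d_path x y) as P. rewrite E in P.
  destruct (path_S_inv _ _ _ P) as [z [Hz Pz]].
  exists z.
  pose proof (d_min _ _ _ (path_one _ _ Hz)). pose proof (d_min _ _ _ Pz).
  pose proof (proj2 (proj2 d_metric) x z y).
  assert (d x z <> 0).
  { intros E0. apply d_zero in E0. subst z. pose proof (d_min _ _ _ Pz). lia. }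
  lia.
Qed.

Lemma d_geodesic : Geodesic d.
Proof. apply geodesic_of_step. apply d_metric. apply d_zero. apply d_step. Qed.

End Dist.
End Graph.

Lemma lipschitz (G : Group) (S1 S' : G -> Prop) (d' : G -> G -> nat) (Md' : Metric d') (c : nat) :
  (forall u v, cay_adj S1 u v -> d' u v <= c) ->
  forall x y n, cay_path S1 x y n -> d' x y <= c * n.
Proof.
  intros H x y n P. induction P as [a|a b e m Hab P IH].
  - rewrite (drefl d' Md'). lia.
  - pose proof (dtri d' Md' a b e). specialize (H _ _ Hab). lia.
Qed.

Lemma gVg (G : Group) (g x : G) : gmul (ginv g) (gmul g x) = x.
Proof. rewrite gmulA, gmulVl, gmul1l. auto. Qed.

Lemma simulate (G : Group) (S1 S2 : G -> Prop) :
  (forall u v, cay_adj S1 u v -> exists k, cay_path S2 u v k) ->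
  forall x y n, cay_path S1 x y n -> exists k, cay_path S2 x y k.
Proof.
  intros H x y n P. induction P as [a|a b e m Hab P IH].
  - exists 0; constructor.
  - destruct (H _ _ Hab) as [k1 P1]. destruct IH as [k2 P2]. exists (k1 + k2).
    eapply path_app; eauto.
Qed.

Theorem lemma3p4 (G : Group) (A B : G -> Prop) (Cs : list (G -> Prop)) :
  is_subgroup A -> is_subgroup B -> Forall (@is_subgroup G) Cs ->
  conjugate_subgroups A B ->
  weakly_hyperbolic_rel G (A :: B :: Cs) ->
  weakly_hyperbolic_rel G (A :: Cs).
Proof.
  intros _ _ _ [g Hg] [X [Hgen [δ Hδ]]].
  set (S := rel_alphabet X (A :: B :: Cs)).
  set (S' := rel_alphabet (g :: X) (A :: Cs)).
  assert (E1r : forall u s, S s -> exists k, k <= 3 /\ cay_path S' u (gmul u s) k).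
  { intros u s [Hs|[H [HH Hs]]].
    - exists 1; split; auto. apply path_one. exists s; split; auto. left; right; auto.
    - destruct HH as [E|[E|HH]]; try subst H.
      + exists 1; split; auto. apply path_one. exists s; split; auto. right; exists A; split; simpl; auto.
      + set (a := gmul g (gmul s (ginv g))).
        assert (Ha : A a) by (apply Hg; auto).
        exists 3; split; auto.
        apply cay_pathS with (gmul u (ginv g)).
        { exists g; split. left; left; auto. right. rewrite <- gmulA, gmulVl, gmul1r; auto. }
        apply cay_pathS with (gmul (gmul u (ginv g)) a).
        { exists a; split. right; exists A; split; simpl; auto. left; auto. }
        apply cay_pathS with (gmul u s).
        { exists g; split. left; left; auto. left. unfold a.
          rewrite <- !gmulA, gmulVl, gmul1r, gVg. auto. }
        constructor.
      + exists 1; split; auto. apply path_one. exists s; split; auto. right; exists H; split; simpl; auto. }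
  assert (E1 : forall u v, cay_adj S u v -> exists k, k <= 3 /\ cay_path S' u v k).
  { intros u v [s [Hs [E|E]]]; subst.
    - apply E1r; auto.
    - destruct (E1r v s Hs) as [k [Hk P]]. exists k; split; auto. apply path_rev; auto. }
  assert (Gen' : rel_generating (g :: X) (A :: Cs)).
  { intros h. destruct (Hgen h) as [n P].
    apply (simulate G S S') with n; auto.
    intros u v Huv. destruct (E1 u v Huv) as [k [_ P']]. eauto. }
  destruct (dist_fun G S (connected_of_gen G S Hgen)) as [d Hd].
  destruct (dist_fun G S' (connected_of_gen G S' Gen')) as [d' Hd'].
  pose proof (d_metric G S d Hd) as Md. pose proof (d_metric G S' d' Hd') as Md'.
  pose proof (d_geodesic G S d Hd) as Gd. pose proof (d_geodesic G S' d' Hd') as Gd'.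
  destruct (Hgen g) as [n0 Pg].
  set (K := Nat.max 1 n0).
  assert (E2r : forall u s, S' s -> d u (gmul u s) <= K).
  { intros u s [Hs|[H [HH Hs]]].
    - destruct Hs as [E|Hs].
      + subst s. apply (path_mul G S u) in Pg. rewrite gmul1r in Pg.
        pose proof (d_min G S d Hd _ _ _ Pg). unfold K; lia.
      + assert (S s) by (left; auto).
        pose proof (d_min G S d Hd _ _ _ (path_one G S u (gmul u s) (ex_intro _ s (conj H (or_introl eq_refl))))).
        unfold K; lia.
    - assert (S s) by (right; exists H; split; auto; destruct HH as [E|HH]; simpl; auto).
      pose proof (d_min G S d Hd _ _ _ (path_one G S u (gmul u s) (ex_intro _ s (conj H0 (or_introl eq_refl))))).
      unfold K; lia. }
  assert (HK : forall x y, d x y <= K * d' x y).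
  { intros x y. apply (lipschitz G S' S d Md K).
    - intros u v [s [Hs [E|E]]]; subst.
      + apply E2r; auto.
      + rewrite (dsym d Md). apply E2r; auto.
    - apply d_path; auto. }
  assert (HL : forall x y, d' x y <= 3 * d x y).
  { intros x y. apply (lipschitz G S S' d' Md' 3).
    - intros u v Huv. destruct (E1 u v Huv) as [k [Hk P]].
      pose proof (d_min G S' d' Hd' _ _ _ P). lia.
    - apply d_path; auto. }
  assert (Hhyp : Hyp d δ).
  { intros x y z w.
    specialize (Hδ x y z w _ _ _ _ _ _ (Hd x y) (Hd x z) (Hd y z) (Hd x w) (Hd y w) (Hd z w)).
    lia. }
  destruct (final d d' Md Md' Gd Gd' K 3 δ HK HL Hhyp) as [δ' Hfin].
  exists (g :: X). split; auto.
  exists δ'. intros x y z w dxy dxz dyz dxw dyw dzw H1 H2 H3 H4 H5 H6.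
  apply (dist_uniq G S' d' Hd') in H1, H2, H3, H4, H5, H6. subst.
  specialize (Hfin x y z w). lia.
Qed.
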